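(* Let $D\ge 1$ and let $\mathcal{X}=\{\boldsymbol{x}_1,\dots,\boldsymbol{x}_n\}\subset\mathbb{R}^D$ be a dataset (points counted with multiplicity), and let $\mathcal{Y}\subset\mathcal{X}$ be a sub-collection such that: (i) $\#(\mathcal{Y})>n-n/(2D+2)$; (ii) there is a nonzero $\boldsymbol{v}\in\mathbb{R}^D$ with $\mathcal{Y}\subset\overline{H(\boldsymbol{0},\boldsymbol{v})}=\{\boldsymbol{x}:\boldsymbol{v}^\top\boldsymbol{x}\ge 0\}$; (iii) $\mathcal{Y}\cap L(\boldsymbol{0},\boldsymbol{v})$ is either $\{\boldsymbol{0}\}$ or empty, where $L(\boldsymbol{0},\boldsymbol{v})=\{\boldsymbol{x}:\boldsymbol{v}^\top\boldsymbol{x}=0\}$. Then $$\mathrm{relint}\big(\mathcal{D}_{1/(2D+2)}(\mathcal{X})\big)\subset\mathrm{conv}(\mathcal{Y})\subset H(\boldsymbol{0},\boldsymbol{v})\cup\{\boldsymbol{0}\},$$ where $H(\boldsymbol{0},\boldsymbol{v})=\{\boldsymbol{x}:\boldsymbol{v}^\top\boldsymbol{x}>0\}$. Moreover, if $\#(\mathcal{Y}\cap L(\boldsymbol{0},\boldsymbol{v}))<n/2$ (counted with multiplicity), then $\mathrm{relint}\big(\mathcal{D}_{1/(2D+2)}(\mathcal{X})\big)\subset H(\boldsymbol{0},\boldsymbol{v})$.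
   Context: Tukey depth of $\boldsymbol{x}\in\mathbb{R}^D$ in $\mathcal{X}=\{\boldsymbol{x}_1,\dots,\boldsymbol{x}_n\}$: $\mathrm{depth}(\boldsymbol{x},\mathcal{X})=\min_{\boldsymbol{u}\in S^{D-1}}\#\{i:\boldsymbol{u}^\top(\boldsymbol{x}_i-\boldsymbol{x})\ge 0\}$. The $\beta$-depth level set is $\mathcal{D}_\beta(\mathcal{X})=\{\boldsymbol{y}\in\mathbb{R}^D:\mathrm{depth}(\boldsymbol{y},\mathcal{X})\ge\beta\,\#(\mathcal{X})\}$. $\mathrm{conv}$ denotes convex hull and $\mathrm{relint}$ relative interior. *)

(* Defs.v *)
From HB Require Import structures.
From mathcomp Require Import all_boot all_order all_algebra.
From mathcomp Require Import classical_sets reals.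
Set Implicit Arguments. Unset Strict Implicit. Unset Printing Implicit Defensive.
Import Order.TTheory GRing.Theory Num.Theory.
Local Open Scope classical_set_scope.
Local Open Scope ring_scope.

Definition dotv (R : pzRingType) (D : nat) (u x : 'rV[R]_D) : R :=
  \sum_(j < D) u ord0 j * x ord0 j.

Definition tukey_depth (R : realType) (D n : nat) (X : 'I_n -> 'rV[R]_D)
  (x : 'rV[R]_D) : R :=
  inf [set (#|[set i | 0 <= dotv u (X i - x)]|)%:R | u in [set u | dotv u u = 1]].

Definition depth_level_set (R : realType) (D n : nat) (X : 'I_n -> 'rV[R]_D)
  (beta : R) : set 'rV[R]_D :=
  [set y | beta * n%:R <= tukey_depth X y].

Definition conv_hull (R : realType) (D n : nat) (X : 'I_n -> 'rV[R]_D)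
  (Y : {set 'I_n}) : set 'rV[R]_D :=
  [set x | exists lam : 'I_n -> R, (forall i, 0 <= lam i) /\
     \sum_(i in Y) lam i = 1 /\ x = \sum_(i in Y) lam i *: X i].

Definition aff_hull (R : realType) (D : nat) (S : set 'rV[R]_D) : set 'rV[R]_D :=
  [set x | exists s : seq (R * 'rV[R]_D), (forall p, p \in s -> S p.2) /\
     \sum_(p <- s) p.1 = 1 /\ x = \sum_(p <- s) p.1 *: p.2].

Definition relint (R : realType) (D : nat) (S : set 'rV[R]_D) : set 'rV[R]_D :=
  [set x | S x /\ exists e : R, 0 < e /\
     forall y, aff_hull S y -> dotv (y - x) (y - x) < e * e -> S y].

Definition open_halfspace (R : realType) (D : nat) (v : 'rV[R]_D) : set 'rV[R]_D :=
  [set x | 0 < dotv v x].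

(* Main.v *)
Require Import Defs.
From HB Require Import structures.
From mathcomp Require Import all_boot all_order all_algebra.
From mathcomp Require Import classical_sets reals.
From mathcomp Require Import boolp ring lra.
Import Order.TTheory GRing.Theory Num.Theory.
Local Open Scope classical_set_scope.
Local Open Scope ring_scope.


Section Dot.
Context {R : realType}.
Context {k : nat}.
Implicit Types u w x y : 'rV[R]_k.

Lemma dotvC u x : dotv u x = dotv x u.
Proof. by apply: eq_bigr => j _; rewrite mulrC. Qed.
Lemma dotvDr u x y : dotv u (x + y) = dotv u x + dotv u y.
Proof. by rewrite /dotv -big_split; apply: eq_bigr => j _; rewrite mxE mulrDr. Qed.
Lemma dotvZr u (c : R) x : dotv u (c *: x) = c * dotv u x.
Proof. by rewrite /dotv mulr_sumr; apply: eq_bigr => j _; rewrite mxE mulrCA. Qed.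
Lemma dotvNr u x : dotv u (- x) = - dotv u x.
Proof. by rewrite -scaleN1r dotvZr mulN1r. Qed.
Lemma dotvBr u x y : dotv u (x - y) = dotv u x - dotv u y.
Proof. by rewrite dotvDr dotvNr. Qed.
Lemma dotv0r u : dotv u 0 = 0.
Proof. by rewrite /dotv big1 // => j _; rewrite mxE mulr0. Qed.
Lemma dotvDl u x y : dotv (x + y) u = dotv x u + dotv y u.
Proof. by rewrite dotvC dotvDr !(dotvC u). Qed.
Lemma dotvZl u (c : R) x : dotv (c *: x) u = c * dotv x u.
Proof. by rewrite dotvC dotvZr dotvC. Qed.
Lemma dotvNl u x : dotv (- x) u = - dotv x u.
Proof. by rewrite dotvC dotvNr dotvC. Qed.
Lemma dotvBl u x y : dotv (x - y) u = dotv x u - dotv y u.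
Proof. by rewrite dotvDl dotvNl. Qed.
Lemma dotv0l u : dotv 0 u = 0.
Proof. by rewrite dotvC dotv0r. Qed.
Lemma dotv_sumr (I : Type) (s : seq I) (P : pred I) (F : I -> 'rV[R]_k) u :
  dotv u (\sum_(i <- s | P i) F i) = \sum_(i <- s | P i) dotv u (F i).
Proof.
exact: (big_morph _ (dotvDr u) (dotv0r u)).
Qed.
Lemma dotv_ge0 x : 0 <= dotv x x.
Proof. by apply: sumr_ge0 => j _; rewrite -expr2 sqr_ge0. Qed.
Lemma dotv_eq0 x : dotv x x = 0 -> x = 0.
Proof.
move=> /eqP; rewrite psumr_eq0 => [/allP H|j _]; last by rewrite -expr2 sqr_ge0.
apply/rowP => j; rewrite mxE; have := H j (mem_index_enum j).
by rewrite /= mulf_eq0 orbb => /eqP.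
Qed.
Lemma dotv_gt0 x : x != 0 -> 0 < dotv x x.
Proof.
move=> x0; rewrite lt_neqAle dotv_ge0 andbT eq_sym; apply/eqP => /dotv_eq0 h.
by rewrite h eqxx in x0.
Qed.

Lemma farkas (m : nat) (a : nat -> 'rV[R]_k) (b : 'rV[R]_k) :
  (exists lam : nat -> R, (forall i, 0 <= lam i) /\ b = \sum_(i < m) lam i *: a i)
  \/ (exists w, (forall i, (i < m)%N -> dotv w (a i) <= 0) /\ 0 < dotv w b).
Proof.
elim: m a b => [|m IH] a b.
  have [->|b0] := eqVneq b 0.
    by left; exists (fun=> 0); split => //; rewrite big_ord0.
  by right; exists b; split => //; exact: dotv_gt0.
case: (IH a b) => [[lam [lam0 ->]]|[w [wa wb]]].
  left; exists (fun i => if (i < m)%N then lam i else 0); split.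
    by move=> i; case: ifP.
  by rewrite big_ord_recr /= ltnn scale0r addr0; apply: eq_bigr => i _; rewrite ltn_ord.
have [wam|wam] := lerP (dotv w (a m)) 0.
  right; exists w; split => // i; rewrite ltnS leq_eqVlt => /orP[/eqP->//|]; exact: wa.
set al := dotv w (a m).
pose a' i := al *: a i - dotv w (a i) *: a m.
pose b' := al *: b - dotv w b *: a m.
have al0 : al != 0 by rewrite gt_eqF.
case: (IH a' b') => [[lam [lam0 hb]]|[w' [wa' wb']]].
  left.
  exists (fun i => if (i < m)%N then lam i else al^-1 * (dotv w b - \sum_(j < m) lam j * dotv w (a j))).
  split.
    move=> i; case: ifP => // _; apply: mulr_ge0; first by rewrite invr_ge0 ltW.
    rewrite subr_ge0; apply: le_trans (ltW wb); rewrite -oppr_ge0 -sumrN.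
    by apply: sumr_ge0 => j _; rewrite -mulrN mulr_ge0 // oppr_ge0 wa.
  rewrite big_ord_recr /= ltnn.
  under eq_bigr => i _ do rewrite ltn_ord.
  apply: (scalerI al0).
  rewrite scalerDr scalerA mulrA mulfV // mul1r scalerBl.
  have -> : al *: b = b' + dotv w b *: a m by rewrite /b' subrK.
  rewrite hb /a'.
  have -> : \sum_(i < m) lam i *: (al *: a i - dotv w (a i) *: a m) =
     \sum_(i < m) (al * lam i) *: a i - \sum_(i < m) (lam i * dotv w (a i)) *: a m.
    by rewrite -sumrB; apply: eq_bigr => i _; rewrite scalerBr !scalerA [lam i * al]mulrC.
  have e1 : (\sum_(j < m) lam j * dotv w (a j)) *: a m =
     \sum_(i < m) (lam i * dotv w (a i)) *: a m by rewrite scaler_suml.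
  have e2 : al *: \sum_(i < m) lam i *: a i = \sum_(i < m) (al * lam i) *: a i.
    by rewrite scaler_sumr; apply: eq_bigr => i _; rewrite scalerA.
  rewrite e1 e2.
  by rewrite -addrA [_ + dotv w b *: _]addrC.
right; exists (al *: w' - dotv w' (a m) *: w); split.
  move=> i; rewrite ltnS leq_eqVlt => /orP[/eqP->|im].
    by rewrite dotvBl !dotvZl /al mulrC subrr.
  have := wa' i im; rewrite /a' dotvBr !dotvZr dotvBl !dotvZl.
  by rewrite [dotv w (a i) * _]mulrC.
by move: wb'; rewrite /b' dotvBr !dotvZr dotvBl !dotvZl [dotv w b * _]mulrC.
Qed.

End Dot.


Lemma dotv_row_mx (R : realType) (k l : nat) (a c : 'rV[R]_k) (b d : 'rV[R]_l) :
  dotv (row_mx a b) (row_mx c d) = dotv a c + dotv b d.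
Proof.
rewrite /dotv big_split_ord /=; congr (_ + _); apply: eq_bigr => j _.
  by rewrite !row_mxEl.
by rewrite !row_mxEr.
Qed.

Lemma separation (R : realType) (D n : nat) (X : 'I_n -> 'rV[R]_D) (Y : {set 'I_n})
  (x : 'rV[R]_D) : ~ conv_hull X Y x ->
  exists w, forall i, i \in Y -> dotv w (X i) < dotv w x.
Proof.
move=> nx.
pose ind (i : 'I_n) : R := (i \in Y)%:R.
pose a (j : nat) : 'rV[R]_(D + 1) :=
  if (insub j : option 'I_n) is Some i then ind i *: row_mx (X i) 1 else 0.
have aE (i : 'I_n) : a (val i) = ind i *: row_mx (X i) 1 by rewrite /a valK.
case: (@farkas R (D + 1) n a (row_mx x 1)) => [[lam [lam0 hb]]|[w [wa wb]]].
  exfalso; apply: nx.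
  exists (fun i => lam (val i)); split; first by move=> i.
  have hs : \sum_(j < n) lam j *: a j =
      row_mx (\sum_(i < n) (lam i * ind i) *: X i) (\sum_(i < n) (lam i * ind i) *: 1).
    rewrite -[LHS]hsubmxK; congr row_mx; rewrite linear_sum; apply: eq_bigr => i _;
      by rewrite linearZ /= aE linearZ /= ?row_mxKl ?row_mxKr scalerA.
  rewrite hs in hb; have [hx h1] := eq_row_mx hb.
  split.
    have := congr1 (fun M : 'rV[R]_1 => M ord0 ord0) h1.
    rewrite /= mxE summxE eqxx => e1; rewrite [RHS]e1.
    rewrite [RHS](bigID (fun i => i \in Y)) /= [X in _ = _ + X]big1 ?addr0.
      by apply: eq_bigr => i iY; rewrite !mxE /ind iY mulr1 mulr1.
    by move=> i iY; rewrite !mxE /ind (negbTE iY) mulr0 mul0r.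
  rewrite hx (bigID (fun i => i \in Y)) /= [X in _ + X = _]big1 ?addr0.
    by apply: eq_bigr => i iY; rewrite /ind iY mulr1.
  by move=> i iY; rewrite /ind (negbTE iY) mulr0 scale0r.
exists (lsubmx w) => i iY.
have e : dotv (rsubmx w) (1 : 'rV[R]_1) = rsubmx w ord0 ord0.
  by rewrite /dotv big_ord1 mxE /= mxE eqxx mulr1.
have dE y : dotv w (row_mx y 1) = dotv (lsubmx w) y + rsubmx w ord0 ord0.
  by rewrite -{1}(hsubmxK w) dotv_row_mx e.
have := wa (val i) (ltn_ord i); rewrite aE dotvZr /ind iY mul1r dE.
move: wb; rewrite dE => wb h.
rewrite -(ltrD2r (rsubmx w ord0 ord0)); exact: le_lt_trans h wb.
Qed.


Lemma lin_dep (R : realType) k (I : finType) (G : {set I}) (p : I -> 'rV[R]_k) :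
  (k < #|G|)%N ->
  exists lam : I -> R, \sum_(i in G) lam i *: p i = 0 /\ exists2 i, i \in G & lam i != 0.
Proof.
move=> kG.
pose M := \matrix_(j < #|G|) p (enum_val j).
have nf : ~~ row_free M.
  rewrite /row_free; apply/negP => /eqP h.
  by have := rank_leq_col M; rewrite h leqNgt kG.
have : kermx M != 0 by rewrite kermx_eq0.
case: (pickP (fun r => row r (kermx M) != 0)) => [r hr | h]; last first.
  move=> /eqP hk; exfalso; apply: hk; apply/row_matrixP => r; rewrite row0.
  by have := h r => /= /negbFE/eqP.
move=> _; set u := row r (kermx M) in hr.
have uM : u *m M = 0 by rewrite /u -row_mul mulmx_ker row0.
case: (pickP (fun j => u ord0 j != 0)) => [j0 hj0 | h]; last first.
  exfalso; move/eqP: hr; apply; apply/rowP => j; rewrite [RHS]mxE.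
  by have := h j => /= /negbFE/eqP.
exists (fun i => \sum_(j < #|G| | enum_val j == i) u ord0 j); split.
  rewrite -[RHS]uM mulmx_sum_row.
  rewrite [RHS](partition_big (@enum_val I (mem G)) (mem G)) /=; last by move=> j _; exact: enum_valP.
  apply: eq_bigr => i iG; rewrite scaler_suml; apply: eq_bigr => j /eqP <-.
  by rewrite rowK.
exists (enum_val j0); first exact: enum_valP.
rewrite (big_pred1 j0) // => j /=; exact: (inj_eq (@enum_val_inj _ _)).
Qed.

Lemma cone_comb (R : realType) k (I : finType) (C : 'rV[R]_k -> Prop)
  (Cadd : forall p q, C p -> C q -> C (p + q))
  (Cscale : forall c p, 0 < c -> C p -> C (c *: p))
  (G : {set I}) (c : I -> R) (p : I -> 'rV[R]_k) :
  (forall i, i \in G -> 0 <= c i) -> (forall i, i \in G -> c i != 0 -> C (p i)) ->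
  (\sum_(i in G) c i *: p i = 0 \/ C (\sum_(i in G) c i *: p i)).
Proof.
move=> c0 cC.
apply: (big_ind (fun x => x = 0 \/ C x)); first by left.
  move=> x y [->|hx] [->|hy]; rewrite ?addr0 ?add0r; by [left|right|right; apply: Cadd].
move=> i iG; have [->|ci] := eqVneq (c i) 0; first by left; rewrite scale0r.
right; apply: Cscale; last exact: cC.
by rewrite lt_neqAle eq_sym ci c0.
Qed.

Definition posp {R : realType} (x : R) : R := if 0 <= x then x else 0.

Lemma posp_ge0 (R : realType) (x : R) : 0 <= posp x.
Proof. by rewrite /posp; case: ifP. Qed.

Lemma maxE (R : realType) (x : R) : x = posp x - posp (- x).
Proof.
rewrite /posp; case: (lerP 0 x) => h1; case: (lerP 0 (- x)) => h2; lra.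
Qed.

Lemma helly_cone (R : realType) k (hk : (0 < k)%N) (v : 'rV[R]_k) (I : finType)
  (C : I -> 'rV[R]_k -> Prop)
  (Cadd : forall i p q, C i p -> C i q -> C i (p + q))
  (Cscale : forall i c p, 0 < c -> C i p -> C i (c *: p))
  (Cpos : forall i p, C i p -> 0 < dotv v p)
  (F : {set I})
  (H : forall G : {set I}, G \subset F -> (#|G| <= k)%N -> exists p, forall i, i \in G -> C i p) :
  exists p, forall i, i \in F -> C i p.
Proof.
suff: forall N (G : {set I}), (#|G| <= N)%N -> G \subset F -> exists p, forall i, i \in G -> C i p.
  by move=> /(_ #|F| F (leqnn _) (subxx _)).
elim=> [|N IH] G hG GF.
  by apply: H => //; apply: leq_trans hG _.
case: (leqP #|G| k) => Gk; first exact: H.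
have hp : forall i, exists q, i \in G -> forall j, j \in G -> j != i -> C j q.
  move=> i; case: (boolP (i \in G)) => iG; last by exists 0.
  have h1 : (#|G :\ i| <= N)%N by move: hG; rewrite (cardsD1 i G) iG add1n ltnS.
  have h2 : G :\ i \subset F by apply/fintype.subsetP => x; rewrite !inE => /andP[_ xG]; exact: (fintype.subsetP GF).
  have [q hq] := IH (G :\ i) h1 h2.
  exists q => _ j jG ji; apply: hq; by rewrite !inE ji jG.
have [p hpP] := choice hp.
have [lam0 [hlam0 [i0 i0G li0]]] := @lin_dep R k I G p Gk.
have [lam [hlam lpos]] : exists lam : I -> R,
    \sum_(i in G) lam i *: p i = 0 /\ 0 < lam i0.
  case: (ltgtP (lam0 i0) 0) => h; last by rewrite h eqxx in li0.
    exists (fun i => - lam0 i); split; last by rewrite oppr_gt0.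
    rewrite (_ : \sum_(i in G) - lam0 i *: p i = - \sum_(i in G) lam0 i *: p i).
      by rewrite hlam0 oppr0.
    by rewrite -sumrN; apply: eq_bigr => i _; rewrite scaleNr.
  by exists lam0.
have vp : forall i, i \in G -> 0 < dotv v (p i).
  move=> i iG.
  have : (0 < #|G :\ i|)%N.
    by move: Gk; rewrite (cardsD1 i G) iG add1n ltnS; apply: leq_trans.
  case/card_gt0P => j; rewrite !inE => /andP[ji jG].
  exact: (Cpos _ _ (hpP i iG j jG ji)).
pose q := \sum_(i in G) posp (lam i) *: p i.
have q2 : q = \sum_(i in G) posp (- lam i) *: p i.
  apply/eqP; rewrite -subr_eq0 -sumrB -[X in _ == X]hlam; apply/eqP.
  by apply: eq_bigr => i _; rewrite -scalerBl -maxE.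
have vq : 0 < dotv v q.
  rewrite /q dotv_sumr (bigD1 i0) //= ltr_pwDl //.
    by rewrite dotvZr /posp (ltW lpos) mulr_gt0 // vp.
  apply: sumr_ge0 => i /andP[iG _]; rewrite dotvZr mulr_ge0 ?posp_ge0 //.
  exact: ltW (vp i iG).
exists q => j jG.
have fin : q = 0 \/ C j q -> C j q.
  by case => // q0; move: vq; rewrite q0 dotv0r ltxx.
apply: fin.
case: (lerP (lam j) 0) => hj.
  rewrite /q; apply: cone_comb => //.
  - by move=> c x y; apply: Cadd.
  - by move=> c x y; apply: Cscale.
  - by move=> i _; exact: posp_ge0.
  move=> i iG ci; apply: hpP => //; apply/eqP => ij; subst i.
  move: ci; rewrite /posp; case: ifP => [h|_]; last by rewrite eqxx.
  have e : lam j = 0 by apply/eqP; rewrite eq_le hj h.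
  by rewrite e eqxx.
rewrite q2; apply: cone_comb => //.
- by move=> c x y; apply: Cadd.
- by move=> c x y; apply: Cscale.
- by move=> i _; exact: posp_ge0.
move=> i iG ci; apply: hpP => //; apply/eqP => ij; subst i.
by move: ci; rewrite /posp oppr_ge0 leNgt hj eqxx.
Qed.


Section Depth.
Variables (R : realType) (D n : nat) (X : 'I_n -> 'rV[R]_D).

Definition cnt (u x : 'rV[R]_D) : R := (#|[set i | 0 <= dotv u (X i - x)]|)%:R.

Lemma depth_le x u : dotv u u = 1 -> tukey_depth X x <= cnt u x.
Proof.
move=> uu; apply: (ge_inf _); last by exists u.
by exists 0 => r [u' _ <-]; exact: ler0n.
Qed.

Lemma depth_ge x (b : R) : (0 < D)%N -> (forall u, dotv u u = 1 -> b <= cnt u x) ->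
  b <= tukey_depth X x.
Proof.
move=> hD hb; apply: lb_le_inf; last by move=> r [u uu <-]; exact: hb.
pose u0 : 'rV[R]_D := \row_j (j == Ordinal hD)%:R.
exists (cnt u0 x); exists u0 => //.
rewrite /= /dotv (bigD1 (Ordinal hD)) //= big1 => [|j hj]; rewrite !mxE.
  by rewrite eqxx mulr1 addr0.
by rewrite (negbTE hj) mulr0.
Qed.

Lemma normalize (w : 'rV[R]_D) : w != 0 ->
  exists2 c : R, 0 < c & dotv (c *: w) (c *: w) = 1.
Proof.
move=> w0; have hw : 0 < dotv w w by exact: dotv_gt0.
exists (Num.sqrt (dotv w w))^-1; first by rewrite invr_gt0 sqrtr_gt0.
rewrite dotvZl dotvZr mulrA -expr2 exprVn sqr_sqrtr ?ltW // mulVf //.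
by rewrite gt_eqF.
Qed.

End Depth.
Arguments cnt {R D n} X u x.
Arguments depth_le {R D n} X x u.
Arguments depth_ge {R D n} X x b.
Arguments normalize {R D} w.


Lemma cnt_compl (R : realType) (D n : nat) (X : 'I_n -> 'rV[R]_D) (Y : {set 'I_n}) u x :
  (forall i, i \in Y -> dotv u (X i - x) < 0) -> cnt X u x + (#|Y|)%:R <= n%:R.
Proof.
move=> h; rewrite /cnt -natrD ler_nat.
have sub : [set i | 0 <= dotv u (X i - x)] \subset ~: Y.
  apply/fintype.subsetP => i; rewrite !inE => hi; apply/negP => iY.
  by have := h i iY; rewrite ltNge hi.
have := subset_leq_card sub; rewrite -(leq_add2r #|Y|) => /leq_trans; apply.
by rewrite addnC cardsC card_ord.
Qed.

Lemma part1 (R : realType) (D n : nat) (hD : (1 <= D)%N)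
  (X : 'I_n -> 'rV[R]_D) (Y : {set 'I_n})
  (hY : (n%:R : R) - n%:R / ((2 * D + 2)%N)%:R < (#|Y|)%:R) :
  depth_level_set X (((2 * D + 2)%N)%:R)^-1 `<=` conv_hull X Y.
Proof.
move=> x hx; apply: contrapT => nx.
have [w hw] := @separation R D n X Y x nx.
set K : R := ((2 * D + 2)%N)%:R in hx hY.
have K0 : 0 < K by rewrite /K ltr0n addn2.
have tn : n%:R / K <= n%:R.
  rewrite ler_pdivrMr // ler_peMr // /K ler1n addn2 //.
case: (set_0Vmem Y) => [Y0|[i0 i0Y]].
  by move: hY; rewrite Y0 cards0 => hY; lra.
have w0 : w != 0.
  by apply/eqP => w0; have := hw i0 i0Y; rewrite w0 !dotv0l ltxx.
have [c c0 hc] := normalize w w0.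
have h1 := depth_le X x _ hc.
have h2 : cnt X (c *: w) x + (#|Y|)%:R <= n%:R.
  apply: cnt_compl => i iY; rewrite dotvZl dotvBr pmulr_rlt0 // subr_lt0; exact: hw.
move: hx; rewrite /depth_level_set /= mulrC => hx.
lra.
Qed.

Lemma part2 (R : realType) (D n : nat)
  (X : 'I_n -> 'rV[R]_D) (Y : {set 'I_n}) (v : 'rV[R]_D)
  (hYH : forall i, i \in Y -> 0 <= dotv v (X i))
  (hYL : forall i, i \in Y -> dotv v (X i) = 0 -> X i = 0) :
  conv_hull X Y `<=` open_halfspace v `|` [set 0].
Proof.
move=> x [lam [lam0 [lam1 ->]]].
have hs : dotv v (\sum_(i in Y) lam i *: X i) = \sum_(i in Y) lam i * dotv v (X i).
  by rewrite dotv_sumr; apply: eq_bigr => i _; rewrite dotvZr.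
have ge : 0 <= \sum_(i in Y) lam i * dotv v (X i).
  by apply: sumr_ge0 => i iY; rewrite mulr_ge0 // hYH.
case: (ltrP 0 (\sum_(i in Y) lam i * dotv v (X i))) => h.
  by left; rewrite /open_halfspace /= hs.
right; rewrite /=.
have e0 : \sum_(i in Y) lam i * dotv v (X i) = 0 by apply/eqP; rewrite eq_le h ge.
move/eqP: e0; rewrite psumr_eq0 => [/allP hall|i iY]; last by rewrite mulr_ge0 // hYH.
apply: big1 => i iY.
have := hall i; rewrite mem_index_enum iY /= => /(_ isT); rewrite mulf_eq0 => /orP[/eqP->|/eqP e].
  by rewrite scale0r.
by rewrite (hYL i iY e) scaler0.
Qed.


Lemma min_pos (R : realType) (T : finType) (A : {set T}) (f : T -> R) :
  (forall i, i \in A -> 0 < f i) -> exists2 m, 0 < m & forall i, i \in A -> m <= f i.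
Proof.
move=> hA.
suff: forall s : seq T, (forall i, i \in s -> 0 < f i) ->
    exists2 m, 0 < m & forall i, i \in s -> m <= f i.
  move=> /(_ (enum A)) []; first by move=> i; rewrite mem_enum; exact: hA.
  by move=> m m0 hm; exists m => // i iA; apply: hm; rewrite mem_enum.
elim=> [|x s IH] h; first by exists 1.
have [|m m0 hm] := IH; first by move=> i hs; apply: h; rewrite in_cons hs orbT.
have hx : 0 < f x by apply: h; exact: mem_head.
case: (lerP (f x) m) => hxm.
  exists (f x) => // i; rewrite in_cons => /orP[/eqP->//|hs].
  exact: le_trans hxm (hm i hs).
exists m => // i; rewrite in_cons => /orP[/eqP->|hs]; [exact: ltW | exact: hm].
Qed.

Lemma card_bigcup_le (T I : finType) (G : {set I}) (f : I -> {set T}) :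
  (#|(\bigcup_(S in G) f S)%SET| <= \sum_(S in G) #|f S|)%N.
Proof.
apply: (big_ind2 (fun (A : {set T}) m => #|A| <= m)%N).
- by rewrite cards0.
- move=> A B m1 m2 h1 h2; rewrite cardsU.
  apply: leq_trans (leq_subr _ _) _; exact: leq_add.
- by move=> S _.
Qed.

Lemma part3 (R : realType) (D n : nat) (hD : (1 <= D)%N)
  (X : 'I_n -> 'rV[R]_D) (Y : {set 'I_n}) (v : 'rV[R]_D)
  (hY : (n%:R : R) - n%:R / ((2 * D + 2)%N)%:R < (#|Y|)%:R)
  (hYH : forall i, i \in Y -> 0 <= dotv v (X i))
  (hYL : forall i, i \in Y -> dotv v (X i) = 0 -> X i = 0)
  (hZ : (#|[set i in Y | dotv v (X i) == 0]|)%:R < (n%:R : R) / 2) :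
   relint (depth_level_set X (((2 * D + 2)%N)%:R)^-1) `<=` open_halfspace v.
Proof.
move=> x [xD [e [e0 he]]].
have hc1 := @part1 R D n hD X Y hY.
have hc2 := @part2 R D n X Y v hYH hYL.
case: (hc2 x (hc1 x xD)) => // /= x0; subst x; exfalso.
set K : R := ((2 * D + 2)%N)%:R in hY xD he hc1.
set Dl := depth_level_set X K^-1 in xD he hc1.
have K0 : 0 < K by rewrite /K ltr0n addn2.
set t := n%:R / K in hY.
have hK : t * K = n%:R by rewrite /t divfK // gt_eqF.
have DlE z : Dl z = (t <= tukey_depth X z) by rewrite /Dl /depth_level_set /= mulrC.
set Z := [set i in Y | dotv v (X i) == 0] in hZ.
set Y' := Y :\: Z.
have cardY : (#|Z| + #|Y'|)%N = #|Y|.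
  have eZ : Y :&: Z = Z.
    by apply/finset.setP => i; rewrite !inE andbA andbb.
  by rewrite -(cardsID Z Y) eZ.
have Y'P i : i \in Y' -> 0 < dotv v (X i).
  rewrite !inE => /andP[/negP hz iY]; rewrite lt_neqAle hYH // andbT eq_sym.
  by apply/negP => h; apply: hz; rewrite iY.
have Y'Y i : i \in Y' -> i \in Y by rewrite !inE => /andP[].
have hn : n%:R = 2 * (D%:R * t) + 2 * t.
  by rewrite -hK /K natrD natrM; ring.
have hW : D%:R * t < (#|Y'|)%:R.
  move: hY hZ; rewrite -cardY natrD hn => hY hZ; lra.
have tge0 : 0 <= t by rewrite /t divr_ge0 // ltW.
have Wn : ((#|Y'|)%:R : R) <= n%:R by rewrite ler_nat; apply: leq_trans (max_card _) _; rewrite card_ord.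
have tpos : 0 < t.
  have : 0 < (n%:R : R).
    apply: lt_le_trans Wn; apply: le_lt_trans hW; apply: mulr_ge0 => //; exact: tge0.
  by move=> np; rewrite /t divr_gt0.
pose F := [set S : {set 'I_n} | (S \subset Y') && ((#|Y' :\: S|)%:R < t)]%SET.
pose C (S : {set 'I_n}) (p : 'rV[R]_D) := 0 < dotv v p /\ exists mu : 'I_n -> R,
  (forall i, 0 <= mu i) /\ (forall i, i \notin S -> mu i = 0) /\ p = \sum_i mu i *: X i.
have [c hc] : exists c, forall S, S \in F -> C S c.
  apply: (@helly_cone R D hD v _ C _ _ _ F).
  - rewrite /C => S p q [vp [mu [mu0 [mus pe]]]] [vq [nu [nu0 [nus qe]]]]; split.
      by rewrite dotvDr; apply: addr_gt0.
    rewrite pe qe.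
    exists (fun i => mu i + nu i); split; first by move=> i; rewrite addr_ge0.
    split; first by move=> i iS; rewrite mus // nus // addr0.
    by rewrite -big_split; apply: eq_bigr => i _; rewrite scalerDl.
  - rewrite /C => S a p a0 [vp [mu [mu0 [mus pe]]]]; split.
      by rewrite dotvZr; apply: mulr_gt0.
    rewrite pe.
    exists (fun i => a * mu i); split; first by move=> i; rewrite mulr_ge0 // ltW.
    split; first by move=> i iS; rewrite mus // mulr0.
    by rewrite scaler_sumr; apply: eq_bigr => i _; rewrite scalerA.
  - by rewrite /C => S p [].
  move=> G GF GD.
  pose U := (\bigcup_(S in G) (Y' :\: S))%SET.
  have hU : ((#|U|)%:R : R) < (#|Y'|)%:R.
    apply: le_lt_trans hW.
    apply: le_trans (_ : (\sum_(S in G) (#|Y' :\: S|)%:R : R) <= _).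
      by rewrite -natr_sum ler_nat card_bigcup_le.
    apply: le_trans (_ : (\sum_(S in G) t) <= _).
      apply: ler_sum => S SG; apply: ltW.
      by have := fintype.subsetP GF S SG; rewrite inE => /andP[].
    rewrite sumr_const -(mulr_natl t #|G|); apply: ler_wpM2r => //.
    by rewrite ler_nat.
  have : ~~ (Y' \subset U).
    apply/negP => sub; have := subset_leq_card sub.
    by rewrite -(ler_nat R) leNgt hU.
  case/subsetPn => j jY' jU.
  exists (X j) => S SG; rewrite /C; split; first exact: Y'P.
  exists (fun i => (i == j)%:R); split; first by move=> i; exact: ler0n.
  split.
    move=> i iS; case: (eqVneq i j) => [ij|//]; subst i; exfalso.
    apply: (negP jU); apply/bigcupP; exists S => //; by apply/setDP; split; [exact: jY' | rewrite iS].
  rewrite (bigD1 j) //= eqxx scale1r big1 ?addr0 // => i /negbTE ->.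
  by rewrite scale0r.
have Y'F : Y' \in F.
  rewrite inE; apply/andP; split => //; by rewrite finset.setDv cards0 tpos.
have vc : 0 < dotv v c by case: (hc _ Y'F).
have [m m0 hm] := @min_pos R _ Y' (fun i => dotv v (X i)) Y'P.
pose tz := m / dotv v c.
have tz0 : 0 < tz by rewrite divr_gt0.
pose y := tz *: c.
have vy : dotv v y = m by rewrite dotvZr /tz divfK // gt_eqF.
have d0 : t <= tukey_depth X 0 by rewrite -DlE.
have yD : Dl y.
  rewrite DlE; apply: depth_ge => // u hu.
  case: (lerP (dotv u y) 0) => huy.
    apply: (le_trans d0); apply: (le_trans (depth_le X 0 u hu)).
    rewrite /cnt ler_nat; apply: subset_leq_card; apply/fintype.subsetP => i.
    by rewrite !inE /= subr0 dotvBr => h; rewrite subr_ge0 (le_trans huy h).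
  pose T := [set i in Y' | dotv u y <= dotv u (X i)]%SET.
  have Tc : ((#|T|)%:R : R) <= cnt X u y.
    rewrite /cnt ler_nat; apply: subset_leq_card; apply/fintype.subsetP => j.
    rewrite inE => /andP[_ hj]; rewrite inE /= dotvBr subr_ge0 //.
  apply: (le_trans _ Tc).
  case: (lerP t (#|T|)%:R) => // hT; exfalso.
  pose S := [set i in Y' | dotv u (X i) < dotv u y]%SET.
  have SF : S \in F.
    rewrite inE; apply/andP; split.
      by apply/fintype.subsetP => i; rewrite inE => /andP[].
    apply: le_lt_trans hT; rewrite ler_nat; apply: subset_leq_card.
    apply/fintype.subsetP => i; rewrite !inE => /andP[iS iY]; rewrite iY /=.
    by move: iS; rewrite iY /= -leNgt.
  have [_ [mu [mu0 [mus ce]]]] := hc S SF.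
  have SY' i : i \in S -> i \in Y' by rewrite inE => /andP[].
  pose A := \sum_i mu i.
  have h1 : A * m <= dotv v c.
    rewrite ce dotv_sumr /A mulr_suml; apply: ler_sum => i _; rewrite dotvZr.
    case: (boolP (i \in S)) => iS; last by rewrite mus // !mul0r.
    by apply: ler_wpM2l => //; apply: hm; exact: SY'.
  have h2 : dotv u c < A * dotv u y.
    rewrite -subr_gt0 ce dotv_sumr /A mulr_suml -sumrB.
    have [i0 mi0] : exists i, 0 < mu i.
      apply: contrapT => hno.
      have mu00 : forall i, mu i = 0.
        move=> i; apply/eqP; rewrite eq_le mu0 andbT leNgt; apply/negP => h.
        by apply: hno; exists i.
      by move: vc; rewrite ce big1 ?dotv0r ?ltxx // => i _; rewrite mu00 scale0r.
    have i0S : i0 \in S.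
      by apply/negPn/negP => h; move: mi0; rewrite mus // ltxx.
    rewrite (bigD1 i0) //= ltr_pwDl //.
      rewrite dotvZr -mulrBr mulr_gt0 // subr_gt0.
      by move: i0S; rewrite inE => /andP[].
    apply: sumr_ge0 => i _; rewrite dotvZr -mulrBr.
    case: (boolP (i \in S)) => iS; last by rewrite mus // mul0r.
    by rewrite mulr_ge0 // subr_ge0 ltW //; move: iS; rewrite inE => /andP[].
  have e1 : dotv u y = tz * dotv u c by rewrite dotvZr.
  have uc : 0 < dotv u c by move: huy; rewrite e1 pmulr_rgt0.
  have h3 : A * tz <= 1.
    by rewrite /tz mulrA ler_pdivrMr // mul1r.
  have : A * dotv u y <= dotv u c.
    by rewrite e1 mulrA -[leRHS]mul1r ler_wpM2r // ltW.
  by rewrite leNgt h2.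
pose Q := dotv y y.
have Q0 : 0 <= Q by exact: dotv_ge0.
pose s := e / (1 + Q).
have s0 : 0 < s by rewrite divr_gt0 // ltr_wpDr.
have hs : s * (1 + Q) = e by rewrite /s divfK // gt_eqF // ltr_wpDr.
have zD : Dl ((- s) *: y).
  apply: he.
    exists [:: (1 + s, 0); (- s, y)]; split.
      move=> p; rewrite !inE => /orP[/eqP->|/eqP->] //=.
    rewrite !big_cons !big_nil /= !addr0 scaler0 add0r; split => //; by rewrite addrK.
  rewrite subr0 dotvZl dotvZr mulrA -/Q -hs; nra.
have := hc2 _ (hc1 _ zD).
case => /=; rewrite /open_halfspace /=.
  by rewrite dotvZr vy mulNr oppr_gt0 ltNge (ltW (mulr_gt0 s0 m0)).
move/(congr1 (dotv v)); rewrite dotvZr vy dotv0r mulNr => /eqP.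
by rewrite oppr_eq0 mulf_eq0 !gt_eqF.
Qed.

Theorem lemma3 (R : realType) (D n : nat) (hD : (1 <= D)%N)
  (X : 'I_n -> 'rV[R]_D) (Y : {set 'I_n}) (v : 'rV[R]_D)
  (hY : (n%:R : R) - n%:R / ((2 * D + 2)%N)%:R < (#|Y|)%:R)
  (hv : v != 0)
  (hYH : forall i, i \in Y -> 0 <= dotv v (X i))
  (hYL : forall i, i \in Y -> dotv v (X i) = 0 -> X i = 0) :
  (relint (depth_level_set X (((2 * D + 2)%N)%:R)^-1) `<=` conv_hull X Y /\
   conv_hull X Y `<=` open_halfspace v `|` [set 0]) /\
  ((#|[set i in Y | dotv v (X i) == 0]|)%:R < (n%:R : R) / 2 ->
   relint (depth_level_set X (((2 * D + 2)%N)%:R)^-1) `<=` open_halfspace v).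
Proof.
split; last by move=> hZ; exact: (@part3 R D n hD X Y v hY hYH hYL hZ).
split; last exact: (@part2 R D n X Y v hYH hYL).
by move=> x [xD _]; exact: (@part1 R D n hD X Y hY x xD).
Qed.
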